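(* In the multi-server multi-function distributed computing model $\mathcal{T}(N,K,K_c,M,N_r)$ with cyclic placement of datasets, where $\Delta=K/N\in\mathbb{Z}^+$, suppose the user demands $K_c$ linearly separable functions $[F_1,\dots,F_{K_c}]^\intercal=\mathbf{\Gamma}\mathbf{W}$, with $\mathbf{W}=[W_1,\dots,W_K]^\intercal\in\mathbb{F}_q^{K}$ and known coefficient matrix $\mathbf{\Gamma}\in\mathbb{F}_q^{K_c\times K}$, and that the subfunctions $W_1,\dots,W_K$ are i.i.d. uniformly distributed over a field $\mathbb{F}_q$ of characteristic $q\ge2$. Then characteristic graph-based compression achieves $$R_{\rm ach}\le\begin{cases}\min\{K_c,\Delta\}\,N_r, & 1\le K_c\le \Delta N_r,\\ \min\{K_c,K\}, & \Delta N_r<K_c.\end{cases}$$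
   Context: Setting: $K$ datasets and $N$ non-cooperating servers $\Omega=[N]$; server $i$ stores datasets indexed by $\mathcal{Z}_i$ and holds subfunctions $X_i=\{W_k\}_{k\in\mathcal{Z}_i}$, $W_k=h_k(D_k)\in\mathbb{F}_q$. Cyclic placement with recovery threshold $N_r\in[N]$: $M=\Delta(N-N_r+1)$ and $\mathcal{Z}_i=\bigcup_{r=0}^{\Delta-1}\{\mathrm{mod}(i,N)+rN,\mathrm{mod}(i+1,N)+rN,\dots,\mathrm{mod}(i+N-N_r,N)+rN\}$ (with the convention $\mathrm{mod}(b,a)=a$ if $a$ divides $b$), so that any $N_r$ servers jointly store all datasets. The user must compute the demanded functions asymptotically losslessly from transmissions of $N_r$ servers. Each server $i$ builds the union characteristic graph $G^{\cup}_{X_i}$ (vertex set the support of $X_i$; $x_i^1,x_i^2$ adjacent iff for some realization of the other servers' data with positive probability some demanded function takes different values) and transmits an encoding of a valid coloring of its $n$-th OR power; the rate of server $i$ approaches the graph entropy $H_{G^{\cup}_{X_i}}(X_i)=\min I(X_i;U_i)$ over $U_i$ ranging over maximal independent sets containing $X_i$. $R_{\rm ach}$ denotes the sum of the rates (in $q$-ary symbols per subfunction symbol) of the $N_r$ transmitting servers. *)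

(* Defs.v *)
From HB Require Import structures.
From mathcomp Require Import all_boot all_order all_algebra.
From mathcomp Require Import all_classical all_reals all_analysis.
Set Implicit Arguments. Unset Strict Implicit. Unset Printing Implicit Defensive.
Import Order.TTheory GRing.Theory Num.Theory.
Local Open Scope ring_scope.

Section GraphEntropy.
Variables (R : realType) (V : finType).

Definition independent (adj : rel V) (A : {set V}) : bool :=
  [forall x in A, [forall y in A, ~~ adj x y]].

Definition max_independent (adj : rel V) (A : {set V}) : bool :=
  independent adj A &&
  [forall B : {set V}, (A \proper B) ==> ~~ independent adj B].

(* I(X;U) in nats, for X ~ pX and test channel W(u|x), U ranging over {set V}. *)
Definition mutual_info (pX : V -> R) (W : V -> {set V} -> R) : R :=
  \sum_(x : V) \sum_(A : {set V})
     (if pX x * W x A == 0 then 0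
      else pX x * W x A * ln (W x A / \sum_(y : V) pX y * W y A)).

Definition valid_test_channel (adj : rel V) (pX : V -> R) (W : V -> {set V} -> R) : Prop :=
  [/\ (forall x A, 0 <= W x A),
      (forall x, \sum_(A : {set V}) W x A = 1) &
      (forall x A, 0 < pX x -> 0 < W x A -> max_independent adj A /\ x \in A)].

Definition graph_entropy (adj : rel V) (pX : V -> R) : R :=
  inf [set r : R | exists W, valid_test_channel adj pX W /\ r = mutual_info pX W].

End GraphEntropy.

Section Model.
Variables (R : realType) (F : finFieldType) (N Kc Nr Delta : nat).
Local Notation K := (Delta * N)%N.

(* Cyclic placement, 0-based: server i (0..N-1) stores dataset k (0..K-1)
   iff (k - i) mod N lies in {0, ..., N - Nr}. *)
Definition cyclic_Z (i : 'I_N) : {set 'I_K} :=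
  [set k : 'I_K | ((k + N - i) %% N <= N - Nr)%N].

Definition server_data (Z : {set 'I_K}) := {ffun {k : 'I_K | k \in Z} -> F}.

Definition restrict (Z : {set 'I_K}) (w : 'cV[F]_K) : server_data Z :=
  [ffun k => w (val k) 0].

Definition pW (w : 'cV[F]_K) : R := \prod_(k < K) (#|F|%:R)^-1.

Definition pX (Z : {set 'I_K}) (x : server_data Z) : R :=
  \sum_(w : 'cV[F]_K | restrict Z w == x) pW w.

(* Union characteristic graph of server i, when the servers in S transmit:
   x1, x2 adjacent iff for some realization of the other transmitting
   servers' data, jointly of positive probability with both x1 and x2,
   some demanded function Gamma W differs. *)
Definition char_adj (Gamma : 'M[F]_(Kc, K)) (S : {set 'I_N}) (i : 'I_N) :
    rel (server_data (cyclic_Z i)) :=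
  fun x1 x2 =>
    (x1 != x2) &&
    [exists w1 : 'cV[F]_K, [exists w2 : 'cV[F]_K,
      [&& restrict (cyclic_Z i) w1 == x1, restrict (cyclic_Z i) w2 == x2,
          0 < pW w1, 0 < pW w2,
          [forall j in S, (j != i) ==>
             [forall k in cyclic_Z j, w1 k 0 == w2 k 0]] &
          Gamma *m w1 != Gamma *m w2]]].

(* Rate of server i in q-ary symbols: graph entropy / ln q. *)
Definition server_rate (Gamma : 'M[F]_(Kc, K)) (S : {set 'I_N}) (i : 'I_N) : R :=
  graph_entropy (@char_adj Gamma S i) (fun x : server_data (cyclic_Z i) => pX x) / ln (#|F|%:R : R).

Definition R_ach (Gamma : 'M[F]_(Kc, K)) (S : {set 'I_N}) : R :=
  \sum_(i in S) server_rate Gamma S i.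

End Model.

(* Main.v *)
Require Import Defs.
From HB Require Import structures.
From mathcomp Require Import all_boot all_order all_algebra.
From mathcomp Require Import all_classical all_reals all_analysis.
From mathcomp Require Import ring lra zify.
Import Order.TTheory GRing.Theory Num.Theory.
Local Open Scope ring_scope.
Set Implicit Arguments. Unset Strict Implicit. Unset Printing Implicit Defensive.

Lemma ln_le_sub1 (R : realType) (x : R) : 0 < x -> ln x <= x - 1.
Proof.
move=> x0; have h : -1 < x - 1 by lra.
have := @le_ln1Dx R (x - 1) h.
by have -> : 1 + (x - 1) = x by ring.
Qed.

Lemma inf_le_nonneg (R : realType) (S : set R) x : S x -> 0 <= x -> inf S <= x.
Proof.
move=> Sx x0; case: (pselect (has_lbound S)) => h.
  exact: ge_inf h x Sx.
rewrite inf_out //; case=> _ //.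
Qed.

Section Ent.
Variables (R : realType) (V C : finType) (adj : rel V) (p : V -> R) (g : V -> C).
Hypotheses (p0 : forall x, 0 < p x) (p1 : \sum_x p x = 1)
  (hg : forall x y, adj x y -> g x != g y).

Let cls c := [set x | g x == c].

Let indep_cls c : independent adj (cls c).
Proof.
apply/forallP => x; apply/implyP; rewrite inE => /eqP gx.
apply/forallP => y; apply/implyP; rewrite inE => /eqP gy.
apply/negP => /hg; by rewrite gx gy eqxx.
Qed.

Let M c := [arg max_(B > cls c | independent adj B && (cls c \subset B)) #|B|].

Let M_max c : max_independent adj (M c) /\ cls c \subset M c.
Proof.
rewrite /M; case: arg_maxnP; first by rewrite indep_cls subxx.
move=> B /andP[iB sB] Hmax; split=> //.
apply/andP; split=> //; apply/forallP => B'; apply/implyP => pBB'.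
apply/negP => iB'.
have := Hmax B'; rewrite iB' (fintype.subset_trans sB (proper_sub pBB')) => /(_ isT).
move=> h; move: (proper_card pBB'); rewrite ltnNge; move: h => /= ->; done.
Qed.

Let W (x : V) (A : {set V}) : R := (A == M (g x))%:R.

Lemma W_valid : valid_test_channel adj p W.
Proof.
split.
- by move=> x A; rewrite /W ler0n.
- move=> x; rewrite (bigD1 (M (g x))) //= big1 ?addr0 /W ?eqxx //.
  by move=> A /negbTE ->.
- move=> x A _; rewrite /W; case: eqP => [->|]; last by rewrite ltxx.
  move=> _; have [mx sx] := M_max (g x); split=> //.
  by move/fintype.subsetP: sx; apply; rewrite inE.
Qed.

Let Q' x := \sum_(y | g y == g x) p y.
Let T x := \sum_y p y * W y (M (g x)).

Let Q'_gt0 x : 0 < Q' x.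
Proof.
rewrite /Q' (bigD1 x) //=; apply: (lt_le_trans (p0 x)).
rewrite lerDl; apply: sumr_ge0 => y _; exact: ltW.
Qed.

Let Q'_le_T x : Q' x <= T x.
Proof.
rewrite /Q' /T big_mkcond /=; apply: ler_sum => y _.
case: eqP => [gyx|_]; first by rewrite /W gyx eqxx mulr1.
by apply: mulr_ge0; [exact: ltW|rewrite /W ler0n].
Qed.

Let T_le1 x : T x <= 1.
Proof.
rewrite -p1 /T; apply: ler_sum => y _; rewrite /W.
by case: eqP => _; rewrite ?mulr1 ?mulr0 //; exact: ltW.
Qed.

Let mi_eq : mutual_info p W = \sum_x p x * ln (T x)^-1.
Proof.
apply: eq_bigr => x _.
rewrite (bigD1 (M (g x))) //= [X in _ + X]big1 ?addr0.
  rewrite /W eqxx mulr1 (negbTE (lt0r_neq0 (p0 x))) div1r.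
  by rewrite /T.
by move=> A /negbTE nA; rewrite /W nA mulr0 eqxx.
Qed.

Lemma mi_ge0 : 0 <= mutual_info p W.
Proof.
rewrite mi_eq; apply: sumr_ge0 => x _; apply: mulr_ge0; first exact: ltW.
have T0 : 0 < T x := lt_le_trans (Q'_gt0 x) (Q'_le_T x).
rewrite lnV ?posrE // oppr_ge0; exact: ln_le0.
Qed.

Let sum_div_le : \sum_x p x / Q' x <= #|C|%:R.
Proof.
rewrite (partition_big g predT) //=.
rewrite -[X in _ <= X]sumr_const; apply: ler_sum => c _.
have e : \sum_(x | true && (g x == c)) p x / Q' x
   = (\sum_(x | g x == c) p x) * (\sum_(y | g y == c) p y)^-1.
  rewrite mulr_suml; apply: eq_bigr => x /eqP gx.
  by rewrite /Q' gx.
rewrite e; have [->|nz] := eqVneq (\sum_(x | g x == c) p x) 0.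
  by rewrite mul0r ler01.
by rewrite mulfV.
Qed.

Lemma mi_le : mutual_info p W <= ln (#|C|%:R).
Proof.
case: (pickP (@predT V)) => [x0 _|h]; last first.
  by move: p1; rewrite big_pred0 // => /eqP; rewrite eq_sym oner_eq0.
have n0 : (0 : R) < #|C|%:R.
  by rewrite ltr0n; apply/card_gt0P; exists (g x0).
set n : R := #|C|%:R in n0 *.
rewrite mi_eq.
apply: (@le_trans _ _ (\sum_x p x * (ln n + ((n * Q' x)^-1 - 1)))).
  apply: ler_sum => x _; apply: ler_wpM2l; first exact: ltW.
  have Q0 := Q'_gt0 x.
  have T0 : 0 < T x := lt_le_trans Q0 (Q'_le_T x).
  apply: (@le_trans _ _ (ln n + ln (n * Q' x)^-1)).
    rewrite !lnV ?posrE ?mulr_gt0 // lnM ?posrE // opprD addNKr.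
    rewrite lerN2 ler_ln ?posrE //; exact: Q'_le_T.
  rewrite lerD2l; apply: ln_le_sub1; rewrite invr_gt0; exact: mulr_gt0.
rewrite (eq_bigr (fun x => p x * ln n + p x * ((n * Q' x)^-1 - 1))); last first.
  by move=> x _; rewrite mulrDr.
rewrite big_split /= -mulr_suml p1 mul1r.
rewrite gerDl.
have -> : \sum_x p x * ((n * Q' x)^-1 - 1) = n^-1 * (\sum_x p x / Q' x) - \sum_x p x.
  rewrite mulr_sumr -sumrB; apply: eq_bigr => x _.
  rewrite invfM; ring.
rewrite p1.
rewrite subr_le0 ler_pdivrMl // mulr1; exact: sum_div_le.
Qed.

Lemma ge_bound : graph_entropy adj p <= ln (#|C|%:R).
Proof.
apply: le_trans mi_le; apply: inf_le_nonneg; last exact: mi_ge0.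
exists W; split=> //; exact: W_valid.
Qed.

End Ent.
Section Comb.
Variables (N Nr Delta : nat) (S : {set 'I_N}).
Hypotheses (N0 : (0 < N)%N) (hNr : (1 <= Nr <= N)%N) (hS : #|S| = Nr).
Local Notation a := (N - Nr)%N.
Local Open Scope nat_scope.

Ltac splitifs := repeat match goal with
  | |- context [if ?x <= ?y then _ else _] => case: (leqP x y) => ?; simpl
  end.

Definition D (p j : nat) := if j <= p then p - j else p + N - j.

Lemma memZ (k : 'I_(Delta*N)) (j : 'I_N) :
  (k \in cyclic_Z Nr Delta j) = (D (k %% N) j <= a).
Proof.
rewrite inE; congr (_ <= _).
have jN := ltn_ord j; have pN := ltn_pmod k N0.
rewrite {1}(divn_eq k N).
move: (k %/ N) (k %% N) pN => q p pN.
have -> : q * N + p + N - j = q * N + (p + N - j) by lia.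
rewrite modnMDl /D; case: leqP => h.
  rewrite (_ : p + N - j = p - j + N); last by lia.
  rewrite modnDr modn_small //; lia.
rewrite modn_small //; lia.
Qed.

Definition win p := [set j : 'I_N | D p j <= a].

Lemma card_win p : p < N -> a.+1 <= #|win p|.
Proof.
move=> pN.
pose f (t : 'I_a.+1) : 'I_N := Ordinal (ltn_pmod (p + N - t) N0).
have Df t : D p (f t) = t.
  have tN : (t : nat) < N by have := ltn_ord t; lia.
  rewrite /D /=; case: (leqP t p) => h.
    rewrite (_ : p + N - t = p - t + N); last by lia.
    rewrite modnDr modn_small; last by lia.
    case: leqP; lia.
  rewrite modn_small; last by lia.
  case: leqP; lia.
have inj : injective f.
  by move=> t1 t2 e; apply: val_inj; rewrite /= -(Df t1) -(Df t2) e.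
rewrite -[X in X <= _](card_ord a.+1) -cardsT -(card_imset _ inj).
apply: subset_leq_card; apply/fintype.subsetP => j /imsetP [t _ ->].
rewrite inE Df; have := ltn_ord t; lia.
Qed.

Lemma cover (k : 'I_(Delta*N)) : exists2 j, j \in S & k \in cyclic_Z Nr Delta j.
Proof.
have := card_win (ltn_pmod k N0).
case: (set0Pn (S :&: win (k %% N))) => [[j]|h0].
  rewrite inE => /andP[jS jw] _; exists j => //; rewrite memZ; by rewrite inE in jw.
move=> hw; have e : S :&: win (k %% N) = finset.set0.
  by apply/eqP; apply/negPn/negP => /set0Pn.
have := cardsUI S (win (k %% N)); rewrite e cards0.
have := max_card (S :|: win (k %% N)); rewrite card_ord; move=> h1 h2; have h3 := hS; rewrite h3 in h2; exfalso; move: h1 h2 hw hNr; set U := #|S :|: _|; set W := #|win _|. lia.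
Qed.

Definition E (i : 'I_N) := [set k : 'I_(Delta*N) | (k \in cyclic_Z Nr Delta i) &&
   [forall j in S, (j != i) ==> (k \notin cyclic_Z Nr Delta j)]].

Lemma notE_cov i k : k \notin E i ->
  exists2 j, j \in S & (j != i) && (k \in cyclic_Z Nr Delta j).
Proof.
rewrite inE negb_and => /orP [nz | /forallPn [j]].
  have [j jS kj] := cover k; exists j => //; rewrite kj andbT.
  by apply/eqP => ji; move: nz; rewrite -ji kj.
rewrite negb_imply => /andP [jS]; rewrite negb_imply negbK => h.
by exists j.
Qed.

Lemma card_E i : 2 <= Nr -> #|E i| <= Delta.
Proof.
move=> Nr2.
have blk (k : 'I_(Delta*N)) : k %/ N < Delta by rewrite ltn_divLR // (ltn_ord k).
pose f (k : 'I_(Delta*N)) : 'I_Delta := Ordinal (blk k).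
rewrite -[X in _ <= X](card_ord Delta); apply: (@leq_card_in _ _ f) => k1 k2 h1 h2 e.
have eq1 : k1 %/ N = k2 %/ N by move: e => /(congr1 val).
case: (eqVneq (k1 %% N) (k2 %% N)) => em.
  by apply: val_inj; rewrite /= (divn_eq k1 N) (divn_eq k2 N) eq1 em.
exfalso.
have p1N := ltn_pmod k1 N0; have p2N := ltn_pmod k2 N0.
set X := win (k1 %% N) :|: win (k2 %% N).
have hSX : #|S :&: X| <= 1.
  rewrite -(cards1 i); apply: subset_leq_card; apply/fintype.subsetP => j.
  rewrite !inE => /andP [jS /orP jw]; apply/negPn/negP => ji.
  case: jw => jw.
    move: h1; rewrite inE => /andP [_ /forallP /(_ j)]; rewrite jS ji /= memZ.
    by rewrite jw.
  move: h2; rewrite inE => /andP [_ /forallP /(_ j)]; rewrite jS ji /= memZ.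
  by rewrite jw.
have hX : a.+2 <= #|X|.
  move: em p1N p2N; rewrite /X; set p := k1 %% N; set p' := k2 %% N => em p1N p2N.
  case: (leqP (D p p') a) => hd.
    pose q : 'I_N := Ordinal (ltn_pmod p'.+1 N0).
    have qv : val q = if p'.+1 < N then p'.+1 else 0.
      rewrite /=; case: ltnP => h; first by rewrite modn_small.
      by rewrite (_ : p'.+1 = N) ?modnn //; lia.
    have qn : q \notin win p'.
      rewrite inE /D qv; move: em hd; rewrite /D.
      case: (ltnP p'.+1 N) => hq /=; splitifs; move: Nr2 hNr; lia.
    have qi : q \in win p.
      rewrite inE /D qv; move: em hd; rewrite /D.
      case: (ltnP p'.+1 N) => hq /=; splitifs; move: Nr2 hNr; lia.
    have := card_win p2N.
    have : q |: win p' \subset win p :|: win p'.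
      apply/fintype.subsetP => j; rewrite in_setU1 => /orP [/eqP -> | jw];
        by rewrite finset.in_setU ?qi ?jw ?orbT.
    move/subset_leq_card; rewrite cardsU1 qn; lia.
  pose P' : 'I_N := Ordinal p2N.
  have qn : P' \notin win p by rewrite inE -ltnNge.
  have qi : P' \in win p' by rewrite inE /D /= leqnn subnn.
  have := card_win p1N.
  have : P' |: win p \subset win p :|: win p'.
    apply/fintype.subsetP => j; rewrite in_setU1 => /orP [/eqP -> | jw];
      by rewrite finset.in_setU ?qi ?jw ?orbT.
  move/subset_leq_card; rewrite cardsU1 qn; lia.
have := cardsUI S X; have := max_card (S :|: X).
rewrite card_ord; move: hSX hX hS hNr; set c1 := #|S :|: X|; set c2 := #|S :&: X|; set c3 := #|X|; set c4 := #|S|; lia.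
Qed.

End Comb.

Section Server.
Variables (R : realType) (F : finFieldType) (N Kc Nr Delta : nat)
  (Gamma : 'M[F]_(Kc, Delta * N)) (S : {set 'I_N}) (i : 'I_N).
Hypotheses (N0 : (0 < N)%N) (hNr : (1 <= Nr <= N)%N) (hS : #|S| = Nr).
Local Notation K := (Delta * N)%N.
Local Notation Z := (cyclic_Z Nr Delta i).
Local Notation V := (server_data F Z).

Definition ext (x : V) : 'cV[F]_K := \col_k (oapp x 0 (insub k)).
Definition extE (x : V) : 'cV[F]_K :=
  \col_k (if k \in E Nr Delta S i then oapp x 0 (insub k) else 0).

Lemma restrict_ext (x : V) : Defs.restrict Z (ext x) = x.
Proof. by apply/ffunP => k'; rewrite ffunE mxE valK. Qed.

Lemma pW_gt0 (w : 'cV[F]_K) : 0 < pW R w.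
Proof.
rewrite /pW; apply: prodr_gt0 => k _; rewrite invr_gt0 ltr0n.
by apply/card_gt0P; exists 0.
Qed.

Lemma pX_gt0 (x : V) : 0 < pX R x.
Proof.
rewrite /pX (bigD1 (ext x)) /=; last by rewrite restrict_ext.
apply: (lt_le_trans (pW_gt0 (ext x))).
rewrite -{1}[pW R (ext x)]addr0 lerD2l.
apply: sumr_ge0 => w _; exact: ltW (pW_gt0 _).
Qed.

Lemma pX_sum : \sum_(x : V) pX R x = 1.
Proof.
have h : \sum_(w : 'cV[F]_K) pW R w = 1.
  rewrite /pW; under eq_bigr do rewrite prodr_const card_ord.
  rewrite sumr_const card_mx muln1.
rewrite -[LHS]mulr_natr natrX -exprMn mulVf //.
    by rewrite expr1n.
  by rewrite pnatr_eq0 -lt0n; apply/card_gt0P; exists 0.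
rewrite (partition_big (Defs.restrict Z) predT) // in h.
Qed.

Lemma adj_diff (x1 x2 : V) : char_adj R Gamma S x1 x2 ->
  Gamma *m extE x1 != Gamma *m extE x2.
Proof.
case/andP=> _ /existsP [w1 /existsP [w2 /and5P [r1 r2 _ _ /andP [hj hG]]]].
apply: contra hG => /eqP e.
have d : w1 - w2 = extE x1 - extE x2.
  apply/matrixP => k j0; rewrite ord1 !mxE.
  case: (boolP (k \in E Nr Delta S i)) => kE.
    have kZ : k \in Z by move: kE; rewrite inE => /andP [].
    rewrite (insubT (fun k0 => k0 \in Z) kZ) /=.
    move/eqP: r1 => <-; move/eqP: r2 => <-; by rewrite /Defs.restrict !ffunE.
  have [j jS /andP [ji kj]] := notE_cov N0 hNr hS kE.
  move/forallP: hj => /(_ j); rewrite jS ji /= => /forallP /(_ k).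
  by rewrite kj => /eqP ->; rewrite subrr subrr.
by rewrite -subr_eq0 -mulmxBr d mulmxBr e subrr.
Qed.

Lemma q_gt1 : (1 : R) < #|F|%:R.
Proof.
rewrite ltr1n; apply: (@leq_trans #|[set (0 : F); 1]|).
  by rewrite cards2 eq_sym oner_neq0. by apply: max_card.
Qed.

Lemma rate_le (C : finType) (g : V -> C) m : #|C| = (#|F| ^ m)%N ->
  (forall x y, char_adj R Gamma S x y -> g x != g y) ->
  server_rate R Nr Gamma S i <= m%:R.
Proof.
move=> hC hg.
have lq : 0 < ln (#|F|%:R : R) := ln_gt0 q_gt1.
rewrite /server_rate ler_pdivrMr //.
apply: le_trans (ge_bound pX_gt0 pX_sum hg) _.
rewrite hC natrX lnXn ?(lt_trans ltr01 q_gt1) // [X in _ <= X]mulr_natl.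
exact: lexx.
Qed.

Lemma rate_le_Kc : server_rate R Nr Gamma S i <= Kc%:R.
Proof.
apply: (@rate_le _ (fun x => Gamma *m extE x)); first by rewrite card_mx muln1.
exact: adj_diff.
Qed.

Lemma rate_le_E : server_rate R Nr Gamma S i <= #|E Nr Delta S i|%:R.
Proof.
pose g (x : V) : {ffun {k : 'I_K | k \in E Nr Delta S i} -> F} :=
  [ffun k => extE x (val k) 0].
apply: (@rate_le _ g); first by rewrite card_ffun card_sig.
move=> x y /adj_diff; apply: contra => /eqP e; apply/eqP; congr (_ *m _).
apply/matrixP => k j; rewrite ord1.
case: (boolP (k \in E Nr Delta S i)) => kE.
  by move/ffunP: e => /(_ (Sub k kE)); rewrite !ffunE.
by rewrite !mxE (negbTE kE).
Qed.

End Server.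

Theorem proposition1 (R : realType) (F : finFieldType) (N Kc Nr Delta : nat)
    (Gamma : 'M[F]_(Kc, Delta * N)) (S : {set 'I_N}) :
  (0 < Delta)%N -> (1 <= Nr <= N)%N -> (1 <= Kc)%N -> #|S| = Nr ->
  R_ach R Nr Gamma S <=
    (if (Kc <= Delta * Nr)%N then ((minn Kc Delta) * Nr)%:R
     else (minn Kc (Delta * N))%:R).
Proof.
move=> D0 hNr Kc1 hS.
have N0 : (0 < N)%N by move/andP: hNr => [a b]; apply: leq_trans b.
set b := if (2 <= Nr)%N then minn Kc Delta else minn Kc (Delta * N).
have hb : forall i, i \in S -> server_rate R Nr Gamma S i <= b%:R.
  move=> i _.
  have h1 := rate_le_Kc R Gamma i N0 hNr hS.
  have h2 := rate_le_E R Gamma i N0 hNr hS.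
  have hE : (#|E Nr Delta S i| <= Delta * N)%N.
    by apply: leq_trans (max_card _) _; rewrite card_ord.
  have hEd : (2 <= Nr)%N -> (#|E Nr Delta S i| <= Delta)%N.
    exact: card_E N0 hNr hS i.
  have hm : (minn Kc #|E Nr Delta S i| <= b)%N.
    rewrite /b; case: ifP => h; last by lia.
    have := hEd h; lia.
  apply: le_trans (_ : (minn Kc #|E Nr Delta S i|)%:R <= b%:R); last by rewrite ler_nat.
  case: (leqP Kc #|E Nr Delta S i|) => h.
    exact: h1.
  exact: h2.
rewrite /R_ach; apply: le_trans (ler_sum _ hb) _.
rewrite sumr_const hS -[b%:R *+ Nr]mulr_natr -natrM.
case: ifP => h3; rewrite ler_nat; move: hNr; rewrite /b; case: ifP => h2 hNr'.
- by [].
- have e : Nr = 1%N by lia.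
  rewrite e !muln1 in h3 *; have := leq_pmulr Delta N0; lia.
- idtac.
  have hm : (minn Kc Delta * Nr <= Delta * Nr)%N by rewrite leq_mul2r geq_minr orbT.
  have h4 : (Delta * Nr <= Delta * N)%N.
    by rewrite leq_mul2l; move/andP: hNr' => [_ ->]; rewrite orbT.
  move: hm h4 h3; set x := (Delta * Nr)%N; set y := (Delta * N)%N;
    set z := (minn Kc Delta * Nr)%N; lia.
- have e : Nr = 1%N by lia.
  by rewrite e muln1.
Qed.
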